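(* Under the hypotheses of the real single-interference setting in the context (with $N\ge2$, $\|h_0\|=\|h_1\|=1$, $h_0^{\sf T}h_1=\sin\tau$, $\tau\in(-\pi/2,\pi/2)$, $\sigma_0^2,\sigma_1^2,\sigma_n^2>0$, $c_1\in[-\sigma_0\sigma_1,\sigma_0\sigma_1]$), let $\delta:=\sigma_n^2\tan\tau-c_1\cos\tau$. Then \[ \mathrm{MSE}_{\rm MVDR}=\frac{\sigma_n^2(\sigma_1^2+\sigma_n^2)+|c_1|^2\cos^2\tau}{\sigma_1^2\cos^2\tau+\sigma_n^2},\quad \mathrm{MSE}_{\rm ZF}=\sigma_n^2(\tan^2\tau+1), \] \[ \mathrm{MSE}_{\rm MMSE\text{-}DR}=\frac{\sigma_n^2(\sigma_1^2+\sigma_n^2)}{\sigma_1^2\cos^2\tau+\sigma_n^2}=\mathrm{MSE}_{\rm MVDR}-\frac{|c_1|^2\cos^2\tau}{\sigma_1^2\cos^2\tau+\sigma_n^2}=\mathrm{MSE}_{\rm ZF}-\frac{\sigma_n^4\tan^2\tau}{\sigma_1^2\cos^2\tau+\sigma_n^2}. \] If $\delta=0$, then $\mathrm{MSE}(\lambda)=\mathrm{MSE}_{\rm ZF}=\mathrm{MSE}_{\rm MVDR}$ for all $\lambda\ge0$. If $\delta\ne0$, then with $\gamma:=\sigma_n^2\tan\tau/\delta$, \[ \mathrm{MSE}_{\rm RZF}=\begin{cases}\mathrm{MSE}_{\rm ZF}, & \gamma\le0,\\ \mathrm{MSE}_{\rm MMSE\text{-}DR}, & \gamma\in(0,1),\\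 \mathrm{MSE}_{\rm MVDR}, & \gamma\ge1.\end{cases} \]
   Context: Real-valued single-interference model: $y(k)=s_0(k)h_0+s_1(k)h_1+n(k)\in\mathbb{R}^N$, with real zero-mean jointly weakly stationary signals $s_0,s_1$, $\sigma_j^2:=E[s_j(k)^2]$, $c_1:=E[s_0(k)s_1(k)]$, and real zero-mean noise $n(k)\sim\mathcal{N}(0,\sigma_n^2I)$ uncorrelated with the signals. $R:=E[y(k)y(k)^{\sf T}]$. The MSE of $w$ is $J_{\rm MSE}(w):=E[(w^{\sf T}y(k)-s_0(k))^2]$. Beamformers: RZF $w_{\rm RZF}(\lambda):=R_\lambda^{-1}h_0/(h_0^{\sf T}R_\lambda^{-1}h_0)$ with $R_\lambda:=R+\lambda h_1h_1^{\sf T}$, $\lambda\ge0$; MVDR $w_{\rm MVDR}:=w_{\rm RZF}(0)$; ZF $w_{\rm ZF}:=R^{-1}H(H^{\sf T}R^{-1}H)^{-1}e_1$ with $H=[h_0\ h_1]$, $e_1=[1,0]^{\sf T}$; MMSE-DR $w_{\rm MMSE\text{-}DR}:=\widetilde R^{-1}h_0/(h_0^{\sf T}\widetilde R^{-1}h_0)$ with $\widetilde R:=\sigma_n^2I+\sigma_1^2h_1h_1^{\sf T}$. $\mathrm{MSE}(\lambda):=J_{\rm MSE}(w_{\rm RZF}(\lambda))$, $\mathrm{MSE}_{\rm RZF}:=\inf_{\lambda\ge0}\mathrm{MSE}(\lambda)$, and $\mathrm{MSE}_{X}:=J_{\rm MSE}(w_X)$ for $X\in\{\rm MVDR,ZF,MMSE\text{-}DR\}$.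 *)

(* Defs.v *)
From HB Require Import structures.
From mathcomp Require Import all_boot all_order all_algebra.
From mathcomp Require Import all_classical all_reals all_analysis.

Set Implicit Arguments.
Unset Strict Implicit.
Unset Printing Implicit Defensive.

Import Order.TTheory GRing.Theory Num.Theory.
Local Open Scope ring_scope.

Section Beamformers.
Variables (R : realType) (N : nat).
(* second-order statistics of the model
   y = s0 h0 + s1 h1 + n :  sig0^2 = E[s0^2], sig1^2 = E[s1^2],
   c1 = E[s0 s1], sign^2 = noise variance *)
Variables (h0 h1 : 'cV[R]_N) (sig0 sig1 sign c1 : R).

Definition dotv (u v : 'cV[R]_N) : R := (u^T *m v) 0 0.

(* R := E[y y^T] *)
Definition Rcov : 'M[R]_N :=
  sig0 ^+ 2 *: (h0 *m h0^T) + sig1 ^+ 2 *: (h1 *m h1^T)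
  + c1 *: (h0 *m h1^T + h1 *m h0^T) + sign ^+ 2 *: 1%:M.

(* E[y s0] *)
Definition rcross : 'cV[R]_N := sig0 ^+ 2 *: h0 + c1 *: h1.

(* J_MSE(w) = E[(w^T y - s0)^2] = w^T R w - 2 w^T E[y s0] + E[s0^2] *)
Definition JMSE (w : 'cV[R]_N) : R :=
  dotv w (Rcov *m w) - 2 * dotv w rcross + sig0 ^+ 2.

Definition w_RZF (lam : R) : 'cV[R]_N :=
  let Rl := invmx (Rcov + lam *: (h1 *m h1^T)) in
  (dotv h0 (Rl *m h0))^-1 *: (Rl *m h0).

Definition w_MVDR : 'cV[R]_N := w_RZF 0.

Definition w_ZF : 'cV[R]_N :=
  let Ri := invmx Rcov in
  let H : 'M[R]_(N, 2) := row_mx h0 h1 in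
  Ri *m H *m invmx (H^T *m Ri *m H) *m (delta_mx 0 0 : 'cV[R]_2).

Definition Rtilde : 'M[R]_N := sign ^+ 2 *: 1%:M + sig1 ^+ 2 *: (h1 *m h1^T).

Definition w_MMSEDR : 'cV[R]_N :=
  let Rt := invmx Rtilde in
  (dotv h0 (Rt *m h0))^-1 *: (Rt *m h0).

Definition MSE (lam : R) : R := JMSE (w_RZF lam).
Definition MSE_RZF : R := inf [set MSE lam | lam in [set l : R | 0 <= l]].
Definition MSE_MVDR : R := JMSE w_MVDR.
Definition MSE_ZF : R := JMSE w_ZF.
Definition MSE_MMSEDR : R := JMSE w_MMSEDR.
End Beamformers.

(* Main.v *)
Require Import Defs.
From HB Require Import structures.
From mathcomp Require Import all_boot all_order all_algebra.
From mathcomp Require Import all_classical all_reals all_analysis.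
From mathcomp Require Import ring lra.
Import Order.TTheory GRing.Theory Num.Theory.
Local Open Scope ring_scope.

Lemma mulmx_cV1 {R : realType} {N : nat} (x : 'cV[R]_N) (a : 'M[R]_1) :
  x *m a = a 0 0 *: x.
Proof. by apply/matrixP => i j; rewrite !mxE big_ord1 (ord1 j) mulrC. Qed.

Lemma dotvE {R : realType} {N : nat} (u v : 'cV[R]_N) :
  dotv u v = \sum_i u i 0 * v i 0.
Proof. by rewrite /dotv mxE; apply: eq_bigr => i _; rewrite mxE. Qed.

Lemma dotvC {R : realType} {N : nat} (u v : 'cV[R]_N) : dotv u v = dotv v u.
Proof. by rewrite !dotvE; apply: eq_bigr => i _; rewrite mulrC. Qed.

Lemma dotvDr {R : realType} {N : nat} (u v w : 'cV[R]_N) :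
  dotv u (v + w) = dotv u v + dotv u w.
Proof. by rewrite /dotv mulmxDr mxE. Qed.

Lemma dotvZr {R : realType} {N : nat} (u v : 'cV[R]_N) a :
  dotv u (a *: v) = a * dotv u v.
Proof. by rewrite /dotv -scalemxAr mxE. Qed.

Lemma dotvDl {R : realType} {N : nat} (u v w : 'cV[R]_N) :
  dotv (v + w) u = dotv v u + dotv w u.
Proof. by rewrite dotvC dotvDr !(dotvC u). Qed.

Lemma dotvZl {R : realType} {N : nat} (u v : 'cV[R]_N) a :
  dotv (a *: v) u = a * dotv v u.
Proof. by rewrite dotvC dotvZr (dotvC u). Qed.

Lemma mulhh {R : realType} {N : nat} (u v x : 'cV[R]_N) :
  (u *m v^T) *m x = dotv v x *: u.
Proof. by rewrite -mulmxA mulmx_cV1. Qed.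

Lemma dotv_ge0 {R : realType} {N : nat} (x : 'cV[R]_N) : 0 <= dotv x x.
Proof. by rewrite dotvE; apply: sumr_ge0 => i _; rewrite -expr2 sqr_ge0. Qed.

Lemma dotv_eq0 {R : realType} {N : nat} (x : 'cV[R]_N) : dotv x x = 0 -> x = 0.
Proof.
rewrite dotvE => /psumr_eq0P H.
apply/matrixP => i j; rewrite (ord1 j) mxE.
have Hi : x i 0 * x i 0 = 0 by apply: H => // k _; rewrite -expr2 sqr_ge0.
by move/eqP: Hi; rewrite -expr2 sqrf_eq0 => /eqP ->.
Qed.

Definition vec2 {R : realType} {N : nat} (h0 h1 : 'cV[R]_N) (a b : R) :=
  a *: h0 + b *: h1.

Lemma Rcov_mul {R : realType} {N : nat} (h0 h1 x : 'cV[R]_N) (s0 s1 sn c : R) :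
  Rcov h0 h1 s0 s1 sn c *m x =
  (s0 ^+ 2 * dotv h0 x + c * dotv h1 x) *: h0
  + (s1 ^+ 2 * dotv h1 x + c * dotv h0 x) *: h1 + sn ^+ 2 *: x.
Proof.
rewrite /Rcov !mulmxDl -!scalemxAl !mulmxDl !mulhh mul1mx.
by apply/matrixP => i j; rewrite !mxE; ring.
Qed.

Lemma M_mul {R : realType} {N : nat} (h0 h1 x : 'cV[R]_N) (s0 s1 sn c lam : R) :
  (Rcov h0 h1 s0 s1 sn c + lam *: (h1 *m h1^T)) *m x =
  (s0 ^+ 2 * dotv h0 x + c * dotv h1 x) *: h0
  + (s1 ^+ 2 * dotv h1 x + c * dotv h0 x + lam * dotv h1 x) *: h1 + sn ^+ 2 *: x.
Proof.
rewrite mulmxDl Rcov_mul -scalemxAl mulhh.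
by apply/matrixP => i j; rewrite !mxE; ring.
Qed.

Lemma M_quad {R : realType} {N : nat} (h0 h1 x : 'cV[R]_N) (s0 s1 sn c lam : R) :
  dotv x ((Rcov h0 h1 s0 s1 sn c + lam *: (h1 *m h1^T)) *m x) =
  s0 ^+ 2 * dotv h0 x ^+ 2 + (s1 ^+ 2 + lam) * dotv h1 x ^+ 2
  + 2 * c * dotv h0 x * dotv h1 x + sn ^+ 2 * dotv x x.
Proof.
rewrite M_mul !dotvDr !dotvZr (dotvC x h0) (dotvC x h1); ring.
Qed.

Lemma M_unit {R : realType} {N : nat} (h0 h1 : 'cV[R]_N) (s0 s1 sn c lam : R) :
  0 <= s0 -> 0 <= s1 -> 0 < sn -> - (s0 * s1) <= c -> c <= s0 * s1 -> 0 <= lam ->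
  (Rcov h0 h1 s0 s1 sn c + lam *: (h1 *m h1^T)) \in unitmx.
Proof.
move=> hs0 hs1 hsn hc1 hc2 hl.
rewrite unitmxE unitfE; apply/negP => /det0P [v v0 vM].
have Q : dotv v^T ((Rcov h0 h1 s0 s1 sn c + lam *: (h1 *m h1^T)) *m v^T) = 0.
  by rewrite /dotv trmxK mulmxA vM mul0mx mxE.
have xn0 : dotv v^T v^T != 0.
  apply/eqP => /dotv_eq0 /eqP; rewrite trmx_eq0; exact/negP.
have xpos : 0 < dotv v^T v^T by rewrite lt_def xn0 dotv_ge0.
move: Q; rewrite M_quad.
set p := dotv h0 v^T; set q := dotv h1 v^T; set z := dotv v^T v^T.
move=> Q.
have Hq : 0 <= s0 ^+ 2 * p ^+ 2 + s1 ^+ 2 * q ^+ 2 + 2 * c * p * q.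
  have [pq|pq] := lerP 0 (p * q).
    have : 0 <= (c + s0 * s1) * (p * q) by apply: mulr_ge0; lra.
    have := sqr_ge0 (s0 * p - s1 * q). nra.
  have : 0 <= (s0 * s1 - c) * (- (p * q)) by apply: mulr_ge0; lra.
  have := sqr_ge0 (s0 * p + s1 * q). nra.
have : 0 < sn ^+ 2 * z by apply: mulr_gt0 => //; exact: exprn_gt0.
have : 0 <= lam * q ^+ 2 by apply: mulr_ge0 => //; exact: sqr_ge0.
nra.
Qed.

Lemma vec2_comb {R : realType} {N : nat} (h0 h1 : 'cV[R]_N) a b k x y :
  a *: h0 + b *: h1 + k *: vec2 h0 h1 x y = vec2 h0 h1 (a + k * x) (b + k * y).
Proof. by apply/matrixP => i j; rewrite /vec2 !mxE; ring. Qed.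

Lemma vec2Z {R : realType} {N : nat} (h0 h1 : 'cV[R]_N) k x y :
  k *: vec2 h0 h1 x y = vec2 h0 h1 (k * x) (k * y).
Proof. by apply/matrixP => i j; rewrite /vec2 !mxE; ring. Qed.

Lemma dotv_vec2 {R : realType} {N : nat} (h0 h1 u : 'cV[R]_N) x y :
  dotv u (vec2 h0 h1 x y) = x * dotv u h0 + y * dotv u h1.
Proof. by rewrite /vec2 dotvDr !dotvZr. Qed.

Lemma h0_vec2 {R : realType} {N : nat} (h0 h1 : 'cV[R]_N) : h0 = vec2 h0 h1 1 0.
Proof. by rewrite /vec2 scale1r scale0r addr0. Qed.

Lemma h1_vec2 {R : realType} {N : nat} (h0 h1 : 'cV[R]_N) : h1 = vec2 h0 h1 0 1.
Proof. by rewrite /vec2 scale1r scale0r add0r. Qed.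

Lemma w_RZF_eq {R : realType} {N : nat} (h0 h1 : 'cV[R]_N) (s0 s1 sn c lam s : R) :
  dotv h0 h0 = 1 -> dotv h1 h1 = 1 -> dotv h0 h1 = s -> s ^+ 2 < 1 ->
  0 <= s0 -> 0 <= s1 -> 0 < sn -> - (s0 * s1) <= c -> c <= s0 * s1 -> 0 <= lam ->
  w_RZF h0 h1 s0 s1 sn c lam =
  vec2 h0 h1 ((s1 ^+ 2 + c * s + sn ^+ 2 + lam) /
                ((s1 ^+ 2 + lam) * (1 - s ^+ 2) + sn ^+ 2))
             (- (s1 ^+ 2 * s + c + lam * s) /
                ((s1 ^+ 2 + lam) * (1 - s ^+ 2) + sn ^+ 2)).
Proof.
move=> h00 h11 h01 hs hs0 hs1 hsn hc1 hc2 hl.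
have uM := @M_unit R N h0 h1 s0 s1 sn c lam hs0 hs1 hsn hc1 hc2 hl.
have h10 : dotv h1 h0 = s by rewrite dotvC.
set A00 := s0 ^+ 2 + c * s + sn ^+ 2.
set A01 := s0 ^+ 2 * s + c.
set A10 := s1 ^+ 2 * s + c + lam * s.
set A11 := s1 ^+ 2 + c * s + sn ^+ 2 + lam.
set E := (s1 ^+ 2 + lam) * (1 - s ^+ 2) + sn ^+ 2.
have Dpos : 0 < A00 * A11 - A01 * A10.
  have -> : A00 * A11 - A01 * A10 =
     (s0 ^+ 2 * (s1 ^+ 2 + lam) - c ^+ 2) * (1 - s ^+ 2)
     + sn ^+ 2 * (s0 ^+ 2 + s1 ^+ 2 + lam + 2 * c * s) + sn ^+ 4.
    rewrite /A00 /A01 /A10 /A11; ring.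
  have h1s : 0 <= 1 - s ^+ 2 by lra.
  have hsn2 : 0 < sn ^+ 2 by exact: exprn_gt0.
  have hsn4 : 0 < sn ^+ 4 by exact: exprn_gt0.
  have hdet : 0 <= s0 ^+ 2 * (s1 ^+ 2 + lam) - c ^+ 2.
    have : 0 <= (s0 * s1 - c) * (s0 * s1 + c) by apply: mulr_ge0; lra.
    have : 0 <= s0 ^+ 2 * lam by apply: mulr_ge0 => //; exact: sqr_ge0.
    nra.
  have htr : 0 <= s0 ^+ 2 + s1 ^+ 2 + lam + 2 * c * s.
    have hs1' : -1 <= s <= 1 by apply/andP; split; nra.
    have : 0 <= (s0 * s1 - c) * (1 - s) by apply: mulr_ge0; lra.
    have : 0 <= (s0 * s1 + c) * (1 + s) by apply: mulr_ge0; lra.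
    have := sqr_ge0 (s0 - s1). nra.
  have : 0 <= (s0 ^+ 2 * (s1 ^+ 2 + lam) - c ^+ 2) * (1 - s ^+ 2) by apply: mulr_ge0.
  have : 0 <= sn ^+ 2 * (s0 ^+ 2 + s1 ^+ 2 + lam + 2 * c * s) by apply: mulr_ge0 => //; lra.
  lra.
have Dn0 : A00 * A11 - A01 * A10 != 0 by rewrite gt_eqF.
have En0 : E != 0.
  rewrite gt_eqF // /E; have : 0 < sn ^+ 2 by exact: exprn_gt0.
  have : 0 <= (s1 ^+ 2 + lam) * (1 - s ^+ 2) by apply: mulr_ge0; [have := sqr_ge0 s1; lra | lra].
  lra.
set v := vec2 h0 h1 (A11 / (A00 * A11 - A01 * A10)) (- A10 / (A00 * A11 - A01 * A10)).
have Mv : (Rcov h0 h1 s0 s1 sn c + lam *: (h1 *m h1^T)) *m v = h0.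
  rewrite M_mul /v !dotv_vec2 h00 h11 h01 h10 vec2_comb [RHS](h0_vec2 h0 h1).
  congr vec2; rewrite /A00 /A01 /A10 /A11; field => //.
have Mi : invmx (Rcov h0 h1 s0 s1 sn c + lam *: (h1 *m h1^T)) *m h0 = v.
  by have := mulKmx uM v; rewrite Mv.
rewrite /w_RZF /= Mi /v dotv_vec2 h00 h01 vec2Z.
have -> : A11 / (A00 * A11 - A01 * A10) * 1 + - A10 / (A00 * A11 - A01 * A10) * s
   = E / (A00 * A11 - A01 * A10).
  by rewrite /E /A11 /A10; field.
congr vec2; field; rewrite Dn0 En0 //.
Qed.

Lemma M_pos {R : realType} {N : nat} (h0 h1 x : 'cV[R]_N) (s0 s1 sn c lam : R) :
  0 <= s0 -> 0 <= s1 -> 0 < sn -> - (s0 * s1) <= c -> c <= s0 * s1 -> 0 <= lam ->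
  dotv x ((Rcov h0 h1 s0 s1 sn c + lam *: (h1 *m h1^T)) *m x) = 0 -> x = 0.
Proof.
move=> hs0 hs1 hsn hc1 hc2 hl; rewrite M_quad.
set p := dotv h0 x; set q := dotv h1 x; set z := dotv x x.
move=> Q; apply: dotv_eq0; apply/eqP; rewrite eq_le dotv_ge0 andbT leNgt.
apply/negP => xpos.
have Hq : 0 <= s0 ^+ 2 * p ^+ 2 + s1 ^+ 2 * q ^+ 2 + 2 * c * p * q.
  have [pq|pq] := lerP 0 (p * q).
    have : 0 <= (c + s0 * s1) * (p * q) by apply: mulr_ge0; lra.
    have := sqr_ge0 (s0 * p - s1 * q). nra.
  have : 0 <= (s0 * s1 - c) * (- (p * q)) by apply: mulr_ge0; lra.
  have := sqr_ge0 (s0 * p + s1 * q). nra.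
have : 0 < sn ^+ 2 * z by apply: mulr_gt0 => //; exact: exprn_gt0.
have : 0 <= lam * q ^+ 2 by apply: mulr_ge0 => //; exact: sqr_ge0.
nra.
Qed.

Lemma Rcov_sym {R : realType} {N : nat} (h0 h1 x y : 'cV[R]_N) (s0 s1 sn c : R) :
  dotv (Rcov h0 h1 s0 s1 sn c *m x) y = dotv x (Rcov h0 h1 s0 s1 sn c *m y).
Proof.
rewrite !Rcov_mul !dotvDl !dotvDr !dotvZl !dotvZr.
rewrite (dotvC x h0) (dotvC x h1); ring.
Qed.

Definition Fa {R : realType} (s s1 sn a : R) :=
  s1 ^+ 2 * a ^+ 2 + sn ^+ 2 * (1 - 2 * s * a + a ^+ 2) / (1 - s ^+ 2).

Lemma JMSE_vec2 {R : realType} {N : nat} (h0 h1 : 'cV[R]_N) (s0 s1 sn c s p q : R) :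
  dotv h0 h0 = 1 -> dotv h1 h1 = 1 -> dotv h0 h1 = s -> s ^+ 2 < 1 ->
  p + q * s = 1 ->
  JMSE h0 h1 s0 s1 sn c (vec2 h0 h1 p q) = Fa s s1 sn (p * s + q).
Proof.
move=> h00 h11 h01 hs hpq.
have h10 : dotv h1 h0 = s by rewrite dotvC.
have Kn0 : 1 - s ^+ 2 != 0 by apply/eqP => K; lra.
rewrite /JMSE /rcross Rcov_mul !dotvDr !dotvZr !dotv_vec2.
rewrite !(dotvC (vec2 h0 h1 p q)) !dotv_vec2 h00 h11 h01 h10 /Fa.
have -> : p = 1 - q * s by lra.
by field.
Qed.

Lemma mulH {R : realType} {N : nat} (h0 h1 : 'cV[R]_N) (u : 'M[R]_(1 + 1, 1)) :
  row_mx h0 h1 *m u = vec2 h0 h1 (u (lshift 1 0) 0) (u (rshift 1 0) 0).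
Proof. by rewrite -{1}[u]vsubmxK mul_row_col !mulmx_cV1 !mxE. Qed.

Lemma mulHT {R : realType} {N : nat} (h0 h1 w : 'cV[R]_N) :
  (row_mx h0 h1)^T *m w = col_mx (h0^T *m w) (h1^T *m w).
Proof. by rewrite tr_row_mx mul_col_mx. Qed.

Lemma w_ZF_eq {R : realType} {N : nat} (h0 h1 : 'cV[R]_N) (s0 s1 sn c s : R) :
  dotv h0 h0 = 1 -> dotv h1 h1 = 1 -> dotv h0 h1 = s -> s ^+ 2 < 1 ->
  0 <= s0 -> 0 <= s1 -> 0 < sn -> - (s0 * s1) <= c -> c <= s0 * s1 ->
  exists p q, w_ZF h0 h1 s0 s1 sn c = vec2 h0 h1 p q /\ p + q * s = 1 /\ p * s + q = 0.
Proof.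
move=> h00 h11 h01 hs hs0 hs1 hsn hc1 hc2.
have h10 : dotv h1 h0 = s by rewrite dotvC.
have uR : Rcov h0 h1 s0 s1 sn c \in unitmx.
  have := @M_unit R N h0 h1 s0 s1 sn c 0 hs0 hs1 hsn hc1 hc2 (lexx _).
  by rewrite scale0r addr0.
have Mp : forall x : 'cV[R]_N, dotv x (Rcov h0 h1 s0 s1 sn c *m x) = 0 -> x = 0.
  move=> x; have := @M_pos R N h0 h1 x s0 s1 sn c 0 hs0 hs1 hsn hc1 hc2 (lexx _).
  by rewrite scale0r addr0.
rewrite /w_ZF /=.
set Q := (row_mx h0 h1)^T *m invmx (Rcov h0 h1 s0 s1 sn c) *m row_mx h0 h1.
have uQ : Q \in unitmx.
  rewrite unitmxE unitfE; apply/negP => /det0P [v v0 vQ].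
  set y := row_mx h0 h1 *m v^T.
  have hy : dotv y (invmx (Rcov h0 h1 s0 s1 sn c) *m y) = 0.
    rewrite /dotv /y trmx_mul trmxK !mulmxA.
    by move: vQ; rewrite /Q !mulmxA => ->; rewrite mul0mx mxE.
  set z := invmx (Rcov h0 h1 s0 s1 sn c) *m y.
  have Rz : (Rcov h0 h1 s0 s1 sn c) *m z = y by rewrite /z mulKVmx.
  have z0 : z = 0 by apply: Mp; rewrite -Rcov_sym Rz.
  have y0 : y = 0 by rewrite -Rz z0 mulmx0.
  move: y0; rewrite /y mulH => y0.
  have e0 := congr1 (dotv h0) y0; have e1 := congr1 (dotv h1) y0.
  move: e0 e1; rewrite !dotv_vec2 h00 h01 h10 h11 /dotv !mulmx0 !mxE.
  set x1 : R := v 0 (lshift 1 0); set x2 : R := v 0 (rshift 1 0).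
  move=> e0 e1.
  have hK : 1 - s ^+ 2 != 0 by apply/eqP => K; lra.
  have x10 : x1 = 0.
    have : x1 * (1 - s ^+ 2) = 0.
      transitivity ((x1 * 1 + x2 * s) - s * (x1 * s + x2 * 1)); first ring.
      by rewrite e0 e1; ring.
    by move/eqP; rewrite mulf_eq0 (negbTE hK) orbF => /eqP.
  have x20 : x2 = 0.
    by move: e1; rewrite x10; lra.
  move/negP: v0; apply; rewrite -trmx_eq0 -[v^T]vsubmxK.
  rewrite [usubmx _]mx11_scalar [dsubmx _]mx11_scalar !mxE -/x1 -/x2 x10 x20.
  by rewrite (_ : 0%:M = 0 :> 'M[R]_1) ?col_mx0 //; apply/matrixP=> i j; rewrite !mxE mul0rn.
rewrite -!mulmxA.
set u := invmx Q *m _.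
have Qu : Q *m u = delta_mx 0 0 by rewrite /u mulKVmx.
set w := invmx (Rcov h0 h1 s0 s1 sn c) *m (row_mx h0 h1 *m u).
have HTw : (row_mx h0 h1)^T *m w = delta_mx 0 0.
  by rewrite -Qu /Q /w !mulmxA.
have Rw : (Rcov h0 h1 s0 s1 sn c) *m w = row_mx h0 h1 *m u by rewrite /w mulKVmx.
rewrite mulH in Rw.
set x1 : R := u (lshift 1 0) 0 in Rw; set x2 : R := u (rshift 1 0) 0 in Rw.
rewrite mulHT in HTw.
have d0 : dotv h0 w = 1.
  have := congr1 (fun M : 'M[R]_(1 + 1, 1) => M (lshift 1 0) 0) HTw.
  by rewrite col_mxEu -/(dotv h0 w) => ->; rewrite mxE.
have d1 : dotv h1 w = 0.
  have := congr1 (fun M : 'M[R]_(1 + 1, 1) => M (rshift 1 0) 0) HTw.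
  by rewrite col_mxEd -/(dotv h1 w) => ->; rewrite mxE.
set a := s0 ^+ 2 * dotv h0 w + c * dotv h1 w.
set b := s1 ^+ 2 * dotv h1 w + c * dotv h0 w.
have sn2 : sn ^+ 2 != 0 by rewrite expf_eq0 /= gt_eqF.
have wE : w = vec2 h0 h1 ((x1 - a) / sn ^+ 2) ((x2 - b) / sn ^+ 2).
  move: Rw; rewrite Rcov_mul -/a -/b /vec2 => Rw; rewrite /vec2.
  apply/matrixP => i j; have := congr1 (fun M : 'M[R]_(N, 1) => M i j) Rw; rewrite !mxE => Eij.
  apply: (mulfI sn2).
  transitivity ((x1 - a) * h0 i j + (x2 - b) * h1 i j); first lra.
  by field; rewrite gt_eqF.
exists ((x1 - a) / sn ^+ 2); exists ((x2 - b) / sn ^+ 2); split => //.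
by move: d0 d1; rewrite wE !dotv_vec2 h00 h01 h10 h11; split; lra.
Qed.

Lemma w_MMSEDR_RZF {R : realType} {N : nat} (h0 h1 : 'cV[R]_N) (s0 s1 sn c : R) :
  w_MMSEDR h0 h1 s1 sn = w_RZF h0 h1 0 s1 sn 0 0.
Proof.
rewrite /w_MMSEDR /w_RZF /Rtilde /Rcov.
by rewrite expr0n /= !scale0r !addr0 add0r addrC.
Qed.

Lemma inf_attained {R : realType} (S : set R) (m : R) :
  (forall x, S x -> m <= x) -> S m -> inf S = m.
Proof.
move=> lb Sm; apply/eqP; rewrite eq_le; apply/andP; split.
  by apply: ge_inf => //; exists m => y /lb.
by apply: lb_le_inf => //; exists m.
Qed.

Lemma inf_approx {R : realType} (S : set R) (m : R) :
  (forall x, S x -> m <= x) -> (exists x, S x) ->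
  (forall e, 0 < e -> exists2 x, S x & x < m + e) -> inf S = m.
Proof.
move=> lb [x0 Sx0] ap; apply/eqP; rewrite eq_le; apply/andP; split; last first.
  by apply: lb_le_inf => //; exists x0.
rewrite leNgt; apply/negP => hlt.
have [x Sx xlt] : exists2 x, S x & x < m + (inf S - m) by apply: ap; rewrite subr_gt0.
have : inf S <= x by apply: ge_inf => //; exists m => y /lb.
move: xlt; rewrite addrC subrK => xlt.
by rewrite leNgt xlt.
Qed.

Lemma inv_le {R : realType} (E0 E : R) : 0 < E0 -> E0 <= E -> 0 < 1 / E <= 1 / E0.
Proof.
move=> h0 h1; have hE : 0 < E by apply: lt_le_trans h1.
by rewrite !div1r invr_gt0 hE /= lef_pV2 ?posrE.
Qed.

Ltac fsolve := field; repeat (apply/andP; split); try done.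

Theorem theorem2 (R : realType) (N : nat) (h0 h1 : 'cV[R]_N)
    (tau sig0 sig1 sign c1 : R) :
  (2 <= N)%N ->
  dotv h0 h0 = 1 -> dotv h1 h1 = 1 -> dotv h0 h1 = sin tau ->
  - (pi / 2) < tau -> tau < pi / 2 ->
  0 < sig0 -> 0 < sig1 -> 0 < sign ->
  - (sig0 * sig1) <= c1 -> c1 <= sig0 * sig1 ->
  let MSE_MVDR := MSE_MVDR h0 h1 sig0 sig1 sign c1 in
  let MSE_ZF := MSE_ZF h0 h1 sig0 sig1 sign c1 in
  let MSE_MMSEDR := MSE_MMSEDR h0 h1 sig0 sig1 sign c1 in
  let MSE_RZF := MSE_RZF h0 h1 sig0 sig1 sign c1 in
  let MSE := MSE h0 h1 sig0 sig1 sign c1 in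
  let den := sig1 ^+ 2 * cos tau ^+ 2 + sign ^+ 2 in
  let delta := sign ^+ 2 * tan tau - c1 * cos tau in
  [/\ MSE_MVDR = (sign ^+ 2 * (sig1 ^+ 2 + sign ^+ 2)
                  + `|c1| ^+ 2 * cos tau ^+ 2) / den,
      MSE_ZF = sign ^+ 2 * (tan tau ^+ 2 + 1),
      [/\ MSE_MMSEDR = sign ^+ 2 * (sig1 ^+ 2 + sign ^+ 2) / den,
          MSE_MMSEDR = MSE_MVDR - `|c1| ^+ 2 * cos tau ^+ 2 / den &
          MSE_MMSEDR = MSE_ZF - sign ^+ 4 * tan tau ^+ 2 / den],
      (delta = 0 ->
         forall lam, 0 <= lam -> MSE lam = MSE_ZF /\ MSE_ZF = MSE_MVDR) &
      (delta != 0 ->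
         let gamma := sign ^+ 2 * tan tau / delta in
         [/\ gamma <= 0 -> MSE_RZF = MSE_ZF,
             0 < gamma < 1 -> MSE_RZF = MSE_MMSEDR &
             1 <= gamma -> MSE_RZF = MSE_MVDR])].
Proof.
move=> N2 h00 h11 h01 tl tu hs0 hs1 hsn hc1 hc2 mMVDR mZF mMM mRZF mMSE den delta.
have Cpos : 0 < cos tau by apply: cos_gt0_pihalf; rewrite tl tu.
have Cn0 : cos tau != 0 by rewrite gt_eqF.
have C2 : cos tau ^+ 2 = 1 - sin tau ^+ 2 by rewrite cos2sin2.
have tanE : tan tau = sin tau / cos tau by [].
move: h01; set s := sin tau => h01.
have Kpos : 0 < 1 - s ^+ 2 by rewrite -C2 exprn_gt0.
have Kn0 : 1 - s ^+ 2 != 0 by rewrite gt_eqF.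
have hs : s ^+ 2 < 1 by lra.
have hs0' := ltW hs0; have hs1' := ltW hs1.
have sn2 : 0 < sign ^+ 2 by rewrite exprn_gt0.
have s12 : 0 < sig1 ^+ 2 by rewrite exprn_gt0.
have E0pos : 0 < sig1 ^+ 2 * (1 - s ^+ 2) + sign ^+ 2.
  by have := mulr_gt0 s12 Kpos; lra.
have E0n0 : sig1 ^+ 2 * (1 - s ^+ 2) + sign ^+ 2 != 0 by rewrite gt_eqF.
have Epos : forall lam : R, 0 <= lam -> 0 < (sig1 ^+ 2 + lam) * (1 - s ^+ 2) + sign ^+ 2.
  move=> lam hl; have : 0 < (sig1 ^+ 2 + lam) * (1 - s ^+ 2) by apply: mulr_gt0 => //; lra.
  lra.
have denE : den = sig1 ^+ 2 * (1 - s ^+ 2) + sign ^+ 2 by rewrite /den C2.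
have c1E : `|c1| ^+ 2 = c1 ^+ 2 by rewrite real_normK // num_real.
have deltaE : delta = (sign ^+ 2 * s - c1 * (1 - s ^+ 2)) / cos tau.
  by rewrite /delta tanE -C2 /s; fsolve.
have MSEl : forall lam : R, 0 <= lam ->
    mMSE lam = Fa s sig1 sign ((sign ^+ 2 * s - c1 * (1 - s ^+ 2))
                             / ((sig1 ^+ 2 + lam) * (1 - s ^+ 2) + sign ^+ 2)).
  move=> lam hl; have En0 := lt0r_neq0 (Epos lam hl).
  rewrite /mMSE /MSE (w_RZF_eq _ _ _ _ _ _ _ _ h00 h11 h01 hs hs0' hs1' hsn hc1 hc2 hl).
  rewrite (JMSE_vec2 _ _ _ _ _ _ _ _ _ h00 h11 h01 hs); first by congr Fa; fsolve.
  by fsolve.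
have MVDRE : mMVDR = Fa s sig1 sign ((sign ^+ 2 * s - c1 * (1 - s ^+ 2))
                             / (sig1 ^+ 2 * (1 - s ^+ 2) + sign ^+ 2)).
  by rewrite /mMVDR /MSE_MVDR -/(MSE _ _ _ _ _ _ 0) -/(mMSE 0) MSEl // addr0.
have MME : mMM = Fa s sig1 sign (sign ^+ 2 * s / (sig1 ^+ 2 * (1 - s ^+ 2) + sign ^+ 2)).
  rewrite /mMM /MSE_MMSEDR (w_MMSEDR_RZF h0 h1 sig0 sig1 sign c1).
  have h00' : - (0 * sig1) <= (0 : R) by rewrite mul0r oppr0.
  have h00'' : (0 : R) <= 0 * sig1 by rewrite mul0r.
  rewrite (w_RZF_eq _ _ _ _ _ _ _ _ h00 h11 h01 hs (lexx 0) hs1' hsn h00' h00'' (lexx 0)).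
  rewrite (JMSE_vec2 _ _ _ _ _ _ _ _ _ h00 h11 h01 hs); first by congr Fa; fsolve.
  have En0 := lt0r_neq0 (Epos 0 (lexx 0)).
  by fsolve.
have ZFE : mZF = Fa s sig1 sign 0.
  have [p [q [wE [e1 e2]]]] := w_ZF_eq _ _ _ _ _ _ _ h00 h11 h01 hs hs0' hs1' hsn hc1 hc2.
  by rewrite /mZF /MSE_ZF wE (JMSE_vec2 _ _ _ _ _ _ _ _ _ h00 h11 h01 hs e1) e2.
have tan2 : tan tau ^+ 2 = s ^+ 2 / (1 - s ^+ 2) by rewrite tanE expr_div_n C2.
rewrite denE c1E tan2 C2 -/s.
set X := sign ^+ 2 * s - c1 * (1 - s ^+ 2) in deltaE MSEl MVDRE *.
set E0 := sig1 ^+ 2 * (1 - s ^+ 2) + sign ^+ 2 in E0pos E0n0 MVDRE MME *.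
have MVDRv : mMVDR = (sign ^+ 2 * (sig1 ^+ 2 + sign ^+ 2) + c1 ^+ 2 * (1 - s ^+ 2)) / E0.
  by rewrite MVDRE /Fa /X /E0; fsolve.
have ZFv : mZF = sign ^+ 2 * (s ^+ 2 / (1 - s ^+ 2) + 1).
  by rewrite ZFE /Fa; fsolve.
have MMv : mMM = sign ^+ 2 * (sig1 ^+ 2 + sign ^+ 2) / E0.
  by rewrite MME /Fa /E0; fsolve.
split.
- exact: MVDRv.
- exact: ZFv.
- split.
  + exact: MMv.
  + by rewrite MMv MVDRv; fsolve.
  + by rewrite MMv ZFv /E0; fsolve.
- move=> d0 lam hl.
  have X0 : X = 0.
    by move: d0; rewrite deltaE => /eqP; rewrite mulf_eq0 invr_eq0 (negbTE Cn0) orbF => /eqP.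
  rewrite MSEl // MVDRE X0 !mul0r; split => //.
move=> dn0 gamma.
have Xn0 : X != 0.
  by apply: contraNneq dn0 => X0; rewrite deltaE X0 mul0r.
have gammaE : gamma = sign ^+ 2 * s / X.
  by rewrite /gamma deltaE tanE /X /s; fsolve.
rewrite gammaE; set g := sign ^+ 2 * s / X.
have Apos : 0 < sig1 ^+ 2 + sign ^+ 2 / (1 - s ^+ 2).
  by apply: addr_gt0 => //; apply: divr_gt0.
set A := sig1 ^+ 2 + sign ^+ 2 / (1 - s ^+ 2) in Apos *.
have AX : 0 <= A * X ^+ 2 by apply: mulr_ge0; [exact: ltW | exact: sqr_ge0].
have key : forall lam : R, 0 <= lam -> mMSE lam = mMM + A * X ^+ 2 *
    (1 / ((sig1 ^+ 2 + lam) * (1 - s ^+ 2) + sign ^+ 2) - g / E0) ^+ 2.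
  move=> lam hl; have En0 := lt0r_neq0 (Epos lam hl).
  by rewrite MSEl // MMv /A /g /E0 /X /Fa; fsolve.
have ZFk : mZF = mMM + A * X ^+ 2 * (g / E0) ^+ 2.
  by rewrite ZFv MMv /A /g /E0 /X; fsolve.
have MVk : mMVDR = mMM + A * X ^+ 2 * (1 / E0 - g / E0) ^+ 2.
  by rewrite MVDRv MMv /A /g /E0 /X; fsolve.
have uB : forall lam : R, 0 <= lam ->
    0 < 1 / ((sig1 ^+ 2 + lam) * (1 - s ^+ 2) + sign ^+ 2) <= 1 / E0.
  move=> lam hl; apply: inv_le => //; rewrite /E0.
  by have := mulr_ge0 hl (ltW Kpos); nra.
split.
- move=> g0; rewrite /mRZF /MSE_RZF; apply: inf_approx.
  + move=> _ [lam hl <-]; change (mZF <= mMSE lam).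
    rewrite key // ZFk lerD2l; apply: ler_wpM2l => //.
    have /andP[u0 _] := uB lam hl.
    have : g / E0 <= 0 by apply: mulr_le0_ge0 => //; rewrite invr_ge0 ltW.
    set u := 1 / _ in u0 *; set w := g / E0; nra.
  + exists (mMSE 0); exists 0 => //=.
  + move=> e epos.
    set Z := A * X ^+ 2 * (1 / E0 - 2 * (g / E0)).
    have Z0 : 0 <= Z.
      apply: mulr_ge0 => //.
      have : g / E0 <= 0 by apply: mulr_le0_ge0 => //; rewrite invr_ge0 ltW.
      have : 0 < 1 / E0 by rewrite divr_gt0.
      lra.
    have lam0 : 0 <= (Z + 1) / (e * (1 - s ^+ 2)).
      by apply: divr_ge0; [lra | apply: mulr_ge0; exact: ltW].
    exists (mMSE ((Z + 1) / (e * (1 - s ^+ 2)))); first by exists ((Z + 1) / (e * (1 - s ^+ 2))).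
    have El : (sig1 ^+ 2 + (Z + 1) / (e * (1 - s ^+ 2))) * (1 - s ^+ 2) + sign ^+ 2
              = E0 + (Z + 1) / e.
      by rewrite /E0; have en0 := lt0r_neq0 epos; fsolve.
    have /andP[u0 u1] := uB _ lam0.
    rewrite key // ZFk; move: u0 u1; rewrite El => u0 u1.
    have Elpos : 0 < E0 + (Z + 1) / e by apply: addr_gt0 => //; apply: divr_gt0 => //; lra.
    set u := 1 / (E0 + (Z + 1) / e) in u0 u1 *.
    set w := g / E0.
    have step1 : A * X ^+ 2 * (u - w) ^+ 2 - A * X ^+ 2 * w ^+ 2 <= u * Z.
      have -> : A * X ^+ 2 * (u - w) ^+ 2 - A * X ^+ 2 * w ^+ 2
                = u * (A * X ^+ 2 * (u - 2 * w)) by ring.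
      rewrite /Z; apply: ler_wpM2l; first exact: ltW.
      apply: ler_wpM2l => //; rewrite /w; lra.
    have step2 : u * Z < e.
      rewrite /u mul1r mulrC ltr_pdivrMr //.
      have -> : e * (E0 + (Z + 1) / e) = e * E0 + Z + 1.
        by have en0 := lt0r_neq0 epos; fsolve.
      have := mulr_gt0 epos E0pos; lra.
    lra.
- move=> /andP[gp g1]; rewrite /mRZF /MSE_RZF; apply: inf_attained.
  + move=> _ [lam hl <-]; change (mMM <= mMSE lam).
    rewrite key // lerDl; apply: mulr_ge0 => //; exact: sqr_ge0.
  + have gn0 := lt0r_neq0 gp.
    have lam0 : 0 <= (E0 / g - E0) / (1 - s ^+ 2).
      apply: divr_ge0; last exact: ltW.
      have -> : E0 / g - E0 = E0 * (1 - g) / g by fsolve.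
      by apply: divr_ge0; [apply: mulr_ge0; [exact: ltW | lra] | exact: ltW].
    exists ((E0 / g - E0) / (1 - s ^+ 2)) => //.
    rewrite -/(mMSE _) key //.
    have -> : 1 / ((sig1 ^+ 2 + (E0 / g - E0) / (1 - s ^+ 2)) * (1 - s ^+ 2) + sign ^+ 2)
              - g / E0 = 0 by rewrite /E0; fsolve.
    by rewrite expr0n /= mulr0 addr0.
- move=> g1; rewrite /mRZF /MSE_RZF; apply: inf_attained.
  + move=> _ [lam hl <-]; change (mMVDR <= mMSE lam).
    rewrite key // MVk lerD2l; apply: ler_wpM2l => //.
    have /andP[u0 u1] := uB lam hl.
    set u := 1 / _ in u0 u1 *.
    have : 0 < 1 / E0 by rewrite divr_gt0.
    have -> : g / E0 = g * (1 / E0) by rewrite mul1r.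
    set v := 1 / E0 in u1 *.
    move=> vp; have b : v - g * v <= 0 by nra.
    have a : u - g * v <= v - g * v by lra.
    nra.
  + exists 0; first by rewrite /= lexx.
    by [].  
Qed.
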